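(* Let $0<a<1$ and let $\Psi:\overline{\Omega}\times(0,+\infty)\to\mathbb{R}$ be a Hölder continuous function such that for each $x\in\Omega$ the map $s\mapsto\Psi(x,s)/s$ is strictly decreasing on $(0,+\infty)$. Assume $v,w\in C^2(\Omega)\cap C(\overline{\Omega})$ satisfy (a) $\Delta w+\Psi(x,w)+|\nabla w|^a\le0\le\Delta v+\Psi(x,v)+|\nabla v|^a$ in $\Omega$; (b) $v,w>0$ in $\Omega$ and $v<w$ on $\partial\Omega$. Then $v\le w$ in $\Omega$.
   Context: $\Omega\subset\mathbb{R}^N$ ($N\ge 2$) is a bounded domain with smooth boundary. *)

(* Defs.v *)
From HB Require Import structures.
From mathcomp Require Import all_boot all_order all_algebra.
From mathcomp Require Import all_classical all_reals all_analysis.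
Set Implicit Arguments. Unset Strict Implicit. Unset Printing Implicit Defensive.
Import Order.TTheory GRing.Theory Num.Theory.
Import numFieldNormedType.Exports.
Local Open Scope classical_set_scope.
Local Open Scope ring_scope.

Section Defs.
Variables (R : realType) (N : nat).
Notation V := 'rV[R]_N.

Definition ebase (i : 'I_N) : V := delta_mx 0 i.

Fixpoint D_list (vs : seq V) (f : V -> R) : V -> R :=
  match vs with
  | [::] => f
  | u :: us => 'D_u (D_list us f)
  end.

Definition Ck_on (k : nat) (A : set V) (f : V -> R) : Prop :=
  forall vs : seq V, (size vs <= k)%N -> forall x, A x ->
    {for x, continuous (D_list vs f)} /\
    ((size vs < k)%N -> forall u, derivable (D_list vs f) x u).

Definition smooth (f : V -> R) : Prop := forall k, Ck_on k setT f.

Definition bounded_domain (Om : set V) : Prop :=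
  Om !=set0 /\ open Om /\ connected Om /\ bounded_set Om.

Definition smooth_boundary (Om : set V) : Prop :=
  exists rho : V -> R, smooth rho /\ Om = [set x | rho x < 0] /\
    (forall x, rho x = 0 -> exists i, 'D_(ebase i) rho x != 0).

Definition boundary_of (Om : set V) : set V := closure Om `\` Om.

Definition laplacian (f : V -> R) (x : V) : R :=
  \sum_(i < N) 'D_(ebase i) ('D_(ebase i) f) x.

Definition grad_norm (f : V -> R) (x : V) : R :=
  Num.sqrt (\sum_(i < N) ('D_(ebase i) f x) ^+ 2).

Definition loc_holder_on (D : set (V * R)) (F : V -> R -> R) : Prop :=
  forall p, D p -> exists r : R, 0 < r /\ exists C alpha : R,
    0 <= C /\ 0 < alpha <= 1 /\
    forall q1 q2, D q1 -> D q2 ->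
      `|q1.1 - p.1| < r -> `|q1.2 - p.2| < r ->
      `|q2.1 - p.1| < r -> `|q2.2 - p.2| < r ->
      `|F q1.1 q1.2 - F q2.1 q2.2| <= C * powR (`|q1.1 - q2.1| + `|q1.2 - q2.2|) alpha.
End Defs.

(* Main.v *)
Require Import Defs.
From HB Require Import structures.
From mathcomp Require Import all_boot all_order all_algebra.
From mathcomp Require Import all_classical all_reals all_analysis.
Import Order.TTheory GRing.Theory Num.Theory.
Import numFieldNormedType.Exports.
Local Open Scope classical_set_scope.
Local Open Scope ring_scope.

Section S.
Variable R : realType.

Lemma second1 (g G : R -> R) :
  (\forall t \near (0:R), g 0 <= g t) ->
  (\forall t \near (0:R), derivable g t 1 /\ 'D_1 g t = G t) ->
  derivable G 0 1 -> G 0 = 0 /\ 0 <= 'D_1 G 0.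
Proof.
move=> gmin gder dG.
have : \forall t \near (0:R), g 0 <= g t /\ derivable g t 1 /\ 'D_1 g t = G t.
  by near=> t; split; [near: t; exact: gmin|near: t; exact: gder].
move=> /nbhs_ballP [d /= d0 Hd].
have inbr r t : `|t| < r -> ball (0:R) r t by rewrite /ball /= sub0r normrN.
have inb := inbr d.
have G00 : G 0 = 0.
  have [_ [_ <-]] := Hd 0 (ballxx _ d0).
  have : is_derive (0:R) 1 g 0.
    apply: (@derive1_at_min _ g (- d) d) => //.
    - by rewrite -(subr_ge0) opprK addr_ge0 // ltW.
    - move=> t; rewrite in_itv /= => /andP[t1 t2].
      have tb : `|t| < d by rewrite ltr_norml t1 t2.
      by have [_ []] := Hd t (inb t tb).
    - by rewrite in_itv /= oppr_lt0 d0.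
    - move=> t; rewrite in_itv /= => /andP[t1 t2].
      have tb : `|t| < d by rewrite ltr_norml t1 t2.
      by have [] := Hd t (inb t tb).
  by move=> H; rewrite derive_val.
split => //.
rewrite leNgt; apply/negP => DGlt.
have := cvgr_lt _ dG 0 DGlt.
move=> /(_ (dnbhs_filter _)) H; have /nbhs_ballP [e /= e0 He] : nbhs (0:R) (fun y => y != 0 -> _) := H.
set h := Num.min d e / 2.
have h0 : 0 < h by rewrite divr_gt0 // lt_min d0 e0.
have md : Num.min d e <= d by rewrite ge_min lexx.
have me : Num.min d e <= e by rewrite ge_min lexx orbT.
have mpos : 0 < Num.min d e by rewrite lt_min d0 e0.
have hd : h < d by rewrite /h ltr_pdivrMr // (le_lt_trans md) // ltr_pMr // ltr1n.
have he : h < e by rewrite /h ltr_pdivrMr // (le_lt_trans me) // ltr_pMr // ltr1n.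
have Gneg c : 0 < c <= h -> G c < 0.
  move=> /andP[c0 ch].
  have : ball (0:R) e c by apply: inbr; rewrite gtr0_norm // (le_lt_trans ch).
  move=> /He /(_ (lt0r_neq0 c0)) /=.
  by rewrite G00 subr0 [c%:A]mulr1 addr0 pmulr_rlt0 ?invr_gt0.
have Hder : forall x, x \in `]0, h[%R -> is_derive x 1 g (G x).
  move=> x; rewrite in_itv /= => /andP[x0 xh].
  have xb : `|x| < d by rewrite gtr0_norm // (lt_trans xh).
  have [_ [dx Dx]] := Hd x (inb x xb).
  by apply: DeriveDef.
have Hcont : {within `[0, h], continuous g}.
  apply: continuous_in_subspaceT => x; rewrite inE /= in_itv /= => /andP[x0 xh].
  have xb : `|x| < d by rewrite ger0_norm // (le_lt_trans xh).
  have [_ [dx _]] := Hd x (inb x xb).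
  exact/differentiable_continuous/derivable1_diffP.
have [c cin eq] := MVT h0 Hder Hcont.
have hb : `|h| < d by rewrite gtr0_norm.
have [gm _] := Hd h (inb h hb).
move: eq; rewrite subr0 => eq.
have : G c * h < 0.
  rewrite pmulr_llt0 // Gneg //; apply/andP; split; [by rewrite (itvP cin) | by rewrite ltW // (itvP cin)].
by rewrite -eq subr_lt0 ltNge gm.
Unshelve. all: by end_near. Qed.

Section Dir.
Variable V : normedModType R.

Lemma quot_eq (f : V -> R) x0 e t :
  (fun h : R => h^-1 *: (((fun s : R => f (s *: e + x0)) \o shift t) (h *: 1)
       - f (t *: e + x0))) =
  (fun h : R => h^-1 *: ((f \o shift (t *: e + x0)) (h *: e) - f (t *: e + x0))).
Proof.
apply/funext => h /=; congr (_ *: (f _ - _)).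
by rewrite /shift /= scalerDl addrA [h *: 1]mulr1.
Qed.

Lemma tr_derivable (f : V -> R) x0 e t :
  derivable (fun s : R => f (s *: e + x0)) t 1 <-> derivable f (t *: e + x0) e.
Proof. by rewrite /derivable quot_eq. Qed.

Lemma tr_derive (f : V -> R) x0 e t :
  'D_1 (fun s : R => f (s *: e + x0)) t = 'D_e f (t *: e + x0).
Proof. by rewrite /derive quot_eq. Qed.

Lemma near_line (P : V -> Prop) x0 e :
  (\forall y \near x0, P y) -> \forall t \near (0:R), P (t *: e + x0).
Proof.
move=> H.
have c : (fun t : R => t *: e + x0) @ (0:R) --> x0.
  rewrite -[X in _ --> X](add0r x0) -[X in _ --> X + _](scale0r e).
  apply: cvgD; last exact: cvg_cst.
  apply: cvgZl; exact: cvg_id.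
exact: c H.
Qed.

Lemma dir_min (f Df : V -> R) x0 e :
  (\forall y \near x0, f x0 <= f y) ->
  (\forall y \near x0, derivable f y e /\ 'D_e f y = Df y) ->
  derivable Df x0 e -> 'D_e f x0 = 0 /\ 0 <= 'D_e Df x0.
Proof.
move=> fmin fder dDf.
have z : 0 *: e + x0 = x0 by rewrite scale0r add0r.
have [] := @second1 (fun s => f (s *: e + x0)) (fun s => Df (s *: e + x0)).
- have := near_line _ _ e fmin; apply: filterS => t; by rewrite z.
- have := near_line _ _ e fder; apply: filterS => t [d1 d2].
  by rewrite tr_derivable tr_derive.
- by rewrite tr_derivable z.
- move=> H1 H2; split.
  + have [_ ->] := nbhs_singleton fder.
    by rewrite -z.
  + by move: H2; rewrite tr_derive z.
Qed.
End Dir.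
End S.

Lemma clos_nonneg (R : realType) N (A : set 'rV[R]_N) (f : 'rV[R]_N -> R) :
  {within closure A, continuous f} -> (forall x, A x -> 0 < f x) ->
  forall x, closure A x -> 0 <= f x.
Proof.
move=> cf pf x cx; rewrite leNgt; apply/negP => fx.
have := cvgr_lt _ (cf x) 0 fx.
move=> H0.
have H : within (closure A) (nbhs x) (fun t => f t < 0) 
  by rewrite (nbhs_subspace_in cx); exact: H0.
have [y [Ay Hy]] := cx _ H.
have := Hy (subset_closure Ay).
by rewrite ltNge ltW // pf.
Qed.

Lemma clos_bounded (R : realType) N (A : set 'rV[R]_N) :
  bounded_set A -> bounded_set (closure A).
Proof.
rewrite /bounded_set /= /bounded_near => Ab.
apply: filterS Ab => M HM.
have sub : A `<=` closed_ball_ Num.Def.normr 0 M.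
  by move=> y Ay; rewrite /closed_ball_ /= sub0r normrN; apply: HM.
move=> y /(closureS sub); rewrite -(closure_id _).1; last exact: closed_closed_ball_.
by rewrite /closed_ball_ /= sub0r normrN.
Qed.



Lemma pwlem (R : realType) (lam g a : R) : 1 < lam -> a < 1 -> 0 <= g ->
  powR (lam * g) a <= lam * powR g a.
Proof.
move=> l1 a1 g0.
have l0 : 0 <= lam by rewrite ltW // (lt_trans _ l1).
rewrite powRM //.
have Hl : lam `^ a <= lam by apply: ler1_powR; rewrite ltW.
by rewrite ler_wpM2r // powR_ge0.
Qed.

Theorem lemma2p3 (R : realType) (N : nat) (Om : set 'rV[R]_N) (a : R)
    (Psi : 'rV[R]_N -> R -> R) (v w : 'rV[R]_N -> R) :
  (2 <= N)%N -> bounded_domain Om -> smooth_boundary Om ->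
  0 < a < 1 ->
  loc_holder_on (closure Om `*` [set s : R | 0 < s]) Psi ->
  (forall x, Om x -> forall s t : R, 0 < s -> s < t -> Psi x t / t < Psi x s / s) ->
  Ck_on 2 Om v -> Ck_on 2 Om w ->
  {within closure Om, continuous v} -> {within closure Om, continuous w} ->
  (forall x, Om x -> laplacian w x + Psi x (w x) + powR (grad_norm w x) a <= 0) ->
  (forall x, Om x -> 0 <= laplacian v x + Psi x (v x) + powR (grad_norm v x) a) ->
  (forall x, Om x -> 0 < v x /\ 0 < w x) ->
  (forall x, boundary_of Om x -> v x < w x) ->
  forall x, Om x -> v x <= w x.
Proof.
move=> _ [Om0 [Oopen [_ Obd]]] _ /andP[a0 a1] _ Psidec Cv Cw cv cw Hw Hv pos bnd.
move=> x Ox; rewrite leNgt; apply/negP => wltv.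
have vge0 : forall y, closure Om y -> 0 <= v y.
  by apply: clos_nonneg => // y /pos [].
have wgt0 : forall y, closure Om y -> 0 < w y.
  move=> y cy; have [Oy|nOy] := pselect (Om y); first by have [] := pos y Oy.
  by apply: (le_lt_trans (vge0 y cy)); apply: bnd.
have cpt : compact (closure Om).
  apply: bounded_closed_compact; last exact: closed_closure.
  exact: clos_bounded.
have crat : {within closure Om, continuous (fun y => v y / w y)}.
  move: (cv) (cw); rewrite !continuous_subspace_in => cv' cw'.
  rewrite continuous_subspace_in => y yin.
  have cy : closure Om y by move: yin; rewrite in_setE.
  apply: cvgM; first exact: cv'.
  apply: cvgV; first by rewrite gt_eqF // wgt0.
  exact: cw'.
have ne : closure Om !=set0 by case: Om0 => y Oy; exists y; exact: subset_closure.
have [x0 cx0' x0max'] := EVT_max_rV ne cpt crat.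
have cx0 : closure Om x0 by move: cx0'; rewrite in_setE.
have x0max y : closure Om y -> v y / w y <= v x0 / w x0.
  by move=> cy; apply: x0max'; rewrite in_setE.
clear cx0' x0max'.
set lam := v x0 / w x0.
have wx0 := wgt0 _ cx0.
have lam1 : 1 < lam.
  apply: (lt_le_trans _ (x0max x (subset_closure Ox))).
  by rewrite ltr_pdivlMr ?mul1r //; have [] := pos x Ox.
have Ox0 : Om x0.
  have [//|nO] := pselect (Om x0).
  have H := bnd x0 (conj cx0 nO).
  have : lam < 1 by rewrite /lam ltr_pdivrMr // mul1r.
  by rewrite ltNge ltW.
have vx0 : v x0 = lam * w x0 by rewrite /lam divfK // gt_eqF.
have Onb : nbhs x0 Om := Oopen x0 Ox0.
have fmin : \forall y \near x0, (lam \*: w - v) x0 <= (lam \*: w - v) y.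
  near=> y.
  have Oy : Om y by near: y; exact: Onb.
  have wy : 0 < w y by have [] := pos y Oy.
  change (lam * w x0 - v x0 <= lam * w y - v y).
  rewrite vx0 subrr subr_ge0.
  by have := x0max y (subset_closure Oy); rewrite -/lam ler_pdivrMr.
have key (i : 'I_N) : 'D_(@ebase R N i) v x0 = lam * 'D_(@ebase R N i) w x0 /\
    'D_(@ebase R N i) ('D_(@ebase R N i) v) x0 <= lam * 'D_(@ebase R N i) ('D_(@ebase R N i) w) x0.
  set e := @ebase R N i.
  have dw y : Om y -> derivable w y e by move=> Oy; exact: ((Cw [::] isT y Oy).2 isT e).
  have dv y : Om y -> derivable v y e by move=> Oy; exact: ((Cv [::] isT y Oy).2 isT e).
  have ddw : derivable ('D_e w) x0 e by exact: ((Cw [:: e] isT x0 Ox0).2 isT e).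
  have ddv : derivable ('D_e v) x0 e by exact: ((Cv [:: e] isT x0 Ox0).2 isT e).
  have S1 : \forall y \near x0, derivable (lam \*: w - v) y e /\
      'D_e (lam \*: w - v) y = (lam \*: 'D_e w - 'D_e v) y.
    near=> y.
    have Oy : Om y by near: y; exact: Onb.
    have dwy := dw _ Oy. have dvy := dv _ Oy.
    have dzy : derivable (lam \*: w) y e by apply: derivableZ.
    split; first exact: derivableB.
    by rewrite (deriveB dzy dvy) (deriveZ _ dwy).
  have dzw : derivable (lam \*: 'D_e w) x0 e by apply: derivableZ; exact: ddw.
  have S2 : derivable (lam \*: 'D_e w - 'D_e v) x0 e by exact: derivableB.
  have [H1 H2] := @dir_min R _ (lam \*: w - v) (lam \*: 'D_e w - 'D_e v) x0 e fmin S1 S2.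
  have dzx : derivable (lam \*: w) x0 e by apply: derivableZ; exact: dw.
  rewrite (deriveB dzx (dv _ Ox0)) (deriveZ _ (dw _ Ox0)) in H1.
  rewrite (deriveB dzw ddv) (deriveZ _ ddw) in H2.
  split; first by apply/esym/eqP; rewrite -subr_eq0; apply/eqP.
  by rewrite -subr_ge0.
have lam0 : 0 < lam by apply: lt_trans lam1.
have lap : laplacian v x0 <= lam * laplacian w x0.
  by rewrite /laplacian mulr_sumr; apply: ler_sum => i _; exact: (key i).2.
have grad : grad_norm v x0 = lam * grad_norm w x0.
  rewrite /grad_norm.
  under eq_bigr => i _ do rewrite (key i).1 exprMn.
  by rewrite -mulr_sumr sqrtrM ?sqr_ge0 // sqrtr_sqr ger0_norm // ltW.
have pw : powR (grad_norm v x0) a <= lam * powR (grad_norm w x0) a.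
  by rewrite grad; apply: pwlem => //; rewrite /grad_norm sqrtr_ge0.
have psi : Psi x0 (v x0) < lam * Psi x0 (w x0).
  have wlt : w x0 < lam * w x0 by rewrite ltr_pMl.
  have := Psidec x0 Ox0 (w x0) (lam * w x0) wx0 wlt.
  have lwpos : 0 < lam * w x0 by exact: mulr_gt0.
  rewrite ltr_pdivrMr // => H; rewrite vx0; apply: (lt_le_trans H).
  by rewrite [lam * _]mulrC mulrA divfK ?gt_eqF // mulrC.
have H1 := Hw x0 Ox0.
have H2 := Hv x0 Ox0.
have H3 : lam * (laplacian w x0 + Psi x0 (w x0) + powR (grad_norm w x0) a) <= 0.
  by rewrite pmulr_rle0.
rewrite !mulrDr in H3.
have := lt_le_trans (le_lt_trans H2 (ltr_leD (ler_ltD lap psi) pw)) H3.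
by rewrite ltxx.
Unshelve. all: by end_near.
Qed.
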